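(* Let $\Sigma\subseteq\mathcal L$ be closed under subformulas and let $\mathcal W=(W,\le,\ell,R)$ be a $\Sigma$-labelled system. Then its quotient $\mathcal Q=(W/{\sim},\le_{\mathcal Q},\ell_{\mathcal Q},R^+_{\mathcal Q})$ is a $\Sigma$-labelled system.
   Context: $\mathcal L$: formulas over propositional variables with $\wedge,\vee,\Rightarrow,\Leftarrow$ (co-implication), $\mathsf X,\mathsf Y,\mathsf G,\mathsf H,\mathsf U,\mathsf S$. Let $\Sigma\subseteq\mathcal L$ be closed under subformulas. A $\Sigma$-type is $\Phi\subseteq\Sigma$ such that: for $\varphi\wedge\psi\in\Sigma$, $\varphi\wedge\psi\in\Phi$ iff $\varphi,\psi\in\Phi$; for $\varphi\vee\psi\in\Sigma$, $\varphi\vee\psi\in\Phi$ iff $\varphi\in\Phi$ or $\psi\in\Phi$; for $\varphi\Rightarrow\psi\in\Sigma$, ($\varphi\Rightarrow\psi\in\Phi$ implies $\varphi\notin\Phi$ or $\psi\in\Phi$) and ($\psi\in\Phi$ implies $\varphi\Rightarrow\psi\in\Phi$); for $\varphi\Leftarrow\psi\in\Sigma$, ($\varphi\Leftarrow\psi\in\Phi$ implies $\varphi\in\Phi$) and ($\varphi\in\Phi,\psi\notin\Phi$ implies $\varphi\Leftarrow\psi\in\Phi$). A poset is locally linear if it is a disjoint union of linear posets; write $a\lessgtr b$ if $a\le b$ or $b\le a$. A $\Sigma$-labelled space is $(W,\le,\ell)$ with $(W,\le)$ locally linear, $\ell\colon W\to$ $\Sigma$-types, $w\le v\Rightarrow\ell(w)\supseteq\ell(v)$,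 such that whenever $\varphi\Rightarrow\psi\in\Sigma\setminus\ell(w)$ there is $v\le w$ with $\varphi\in\ell(v)$, $\psi\notin\ell(v)$, and whenever $\varphi\Leftarrow\psi\in\ell(w)$ there is $v\ge w$ with $\varphi\in\ell(v)$, $\psi\notin\ell(v)$. A relation $R\subseteq W\times W$ is convex if every image set and every preimage set of a point is convex in $\le$; fully confluent if (forth–down) $x\le x'Ry'$ implies $xRy\le y'$ for some $y$; (forth–up) $x'\ge xRy$ implies $x'Ry'\ge y$ for some $y'$; (back–down) $x'Ry'\ge y$ implies $x'\ge xRy$ for some $x$; (back–up) $xRy\le y'$ implies $x\le x'Ry'$ for some $x'$; bi-serial if every point has an $R$-successor and an $R$-predecessor. A pair $(\Phi,\Psi)$ of $\Sigma$-types is sensible if for formulas in $\Sigma$: $\mathsf X\varphi\in\Phi\iff\varphi\in\Psi$; $\mathsf Y\varphi\in\Psi\iff\varphi\in\Phi$; $\mathsf G\varphi\in\Phi\iff(\varphi\in\Phi\wedge\mathsf G\varphi\in\Psi)$; $\mathsf H\varphi\in\Psi\iff(\varphi\in\Psi\wedge\mathsf H\varphi\in\Phi)$; $\varphi\,\mathsf U\,\psi\in\Phi\iff(\psi\in\Phi$ or ($\varphi\in\Phi$ and $\varphi\,\mathsf U\,\psi\in\Psi$)); $\varphi\,\mathsf S\,\psi\in\Psi\iff(\psi\in\Psi$ or ($\varphi\in\Psi$ and $\varphi\,\mathsf S\,\psi\in\Phi$)). $R$ is sensible if $wRv$ implies $(\ell(w),\ell(v))$ sensible. A $\Sigma$-labelled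 system is a $\Sigma$-labelled space with a bi-serial, fully confluent, convex, sensible relation. Quotient: for $w\in W$ let $L(w)=\{\ell(v): v\lessgtr w\}$; $w\sim v$ iff $\ell(w)=\ell(v)$ and $L(w)=L(v)$. On $W/{\sim}$: $[w]\le_{\mathcal Q}[v]$ iff $L(w)=L(v)$ and $\ell(w)\supseteq\ell(v)$; $\ell_{\mathcal Q}([w])=\ell(w)$; $R_{\mathcal Q}$ is the smallest relation with $wRv\Rightarrow[w]R_{\mathcal Q}[v]$; $X R^+_{\mathcal Q} Y$ iff there are $X_1\le_{\mathcal Q}X\le_{\mathcal Q}X_2$ and $Y_1\le_{\mathcal Q}Y\le_{\mathcal Q}Y_2$ with $X_2R_{\mathcal Q}Y_1$ and $X_1R_{\mathcal Q}Y_2$. *)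

(* Defs.v *)
Set Implicit Arguments.
Unset Strict Implicit.

Inductive form : Type :=
| Var : nat -> form
| And : form -> form -> form
| Or : form -> form -> form
| Imp : form -> form -> form
| Coimp : form -> form -> form
| Next : form -> form
| Prev : form -> form
| Glob : form -> form
| Hist : form -> form
| Until : form -> form -> form
| Since : form -> form -> form.

Definition fset := form -> Prop.

Definition seteq (A B : fset) : Prop := forall f, A f <-> B f.

Definition subformula_closed (Sigma : fset) : Prop :=
  forall f, Sigma f ->
  match f with
  | Var _ => True
  | And a b | Or a b | Imp a b | Coimp a b | Until a b | Since a b =>
      Sigma a /\ Sigma b
  | Next a | Prev a | Glob a | Hist a => Sigma a
  end.

Definition is_type (Sigma Phi : fset) : Prop :=
  (forall f, Phi f -> Sigma f) /\
  (forall a b, Sigma (And a b) -> (Phi (And a b) <-> Phi a /\ Phi b)) /\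
  (forall a b, Sigma (Or a b) -> (Phi (Or a b) <-> Phi a \/ Phi b)) /\
  (forall a b, Sigma (Imp a b) ->
     (Phi (Imp a b) -> ~ Phi a \/ Phi b) /\ (Phi b -> Phi (Imp a b))) /\
  (forall a b, Sigma (Coimp a b) ->
     (Phi (Coimp a b) -> Phi a) /\ (Phi a -> ~ Phi b -> Phi (Coimp a b))).

Section Structures.
Variable W : Type.

Definition comparable (le : W -> W -> Prop) (a b : W) : Prop := le a b \/ le b a.

(* locally linear poset: a partial order which is a disjoint union of linear
   posets, i.e. there is a partition of W (equivalence E) into blocks such
   that each block is linearly ordered and the order only relates elements of
   the same block *)
Definition locally_linear (le : W -> W -> Prop) : Prop :=
  (forall a, le a a) /\
  (forall a b, le a b -> le b a -> a = b) /\
  (forall a b c, le a b -> le b c -> le a c) /\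
  exists E : W -> W -> Prop,
    (forall a, E a a) /\ (forall a b, E a b -> E b a) /\
    (forall a b c, E a b -> E b c -> E a c) /\
    (forall a b, E a b -> comparable le a b) /\
    (forall a b, le a b -> E a b).

Definition labelled_space (Sigma : fset) (le : W -> W -> Prop) (lab : W -> fset)
  : Prop :=
  locally_linear le /\
  (forall w, is_type Sigma (lab w)) /\
  (forall w v, le w v -> forall f, lab v f -> lab w f) /\
  (forall w a b, Sigma (Imp a b) -> ~ lab w (Imp a b) ->
     exists v, le v w /\ lab v a /\ ~ lab v b) /\
  (forall w a b, lab w (Coimp a b) ->
     exists v, le w v /\ lab v a /\ ~ lab v b).

Definition convex_set (le : W -> W -> Prop) (A : W -> Prop) : Prop :=
  forall y1 y y2, A y1 -> A y2 -> le y1 y -> le y y2 -> A y.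

Definition convex_rel (le : W -> W -> Prop) (R : W -> W -> Prop) : Prop :=
  (forall x, convex_set le (fun y => R x y)) /\
  (forall y, convex_set le (fun x => R x y)).

Definition fully_confluent (le : W -> W -> Prop) (R : W -> W -> Prop) : Prop :=
  (forall x x' y', le x x' -> R x' y' -> exists y, R x y /\ le y y') /\
  (forall x x' y, le x x' -> R x y -> exists y', R x' y' /\ le y y') /\
  (forall x' y' y, R x' y' -> le y y' -> exists x, le x x' /\ R x y) /\
  (forall x y y', R x y -> le y y' -> exists x', le x x' /\ R x' y').

Definition bi_serial (R : W -> W -> Prop) : Prop :=
  forall x, (exists y, R x y) /\ (exists y, R y x).

Definition sensible_pair (Sigma Phi Psi : fset) : Prop :=
  (forall a, Sigma (Next a) -> (Phi (Next a) <-> Psi a)) /\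
  (forall a, Sigma (Prev a) -> (Psi (Prev a) <-> Phi a)) /\
  (forall a, Sigma (Glob a) -> (Phi (Glob a) <-> Phi a /\ Psi (Glob a))) /\
  (forall a, Sigma (Hist a) -> (Psi (Hist a) <-> Psi a /\ Phi (Hist a))) /\
  (forall a b, Sigma (Until a b) ->
     (Phi (Until a b) <-> Phi b \/ (Phi a /\ Psi (Until a b)))) /\
  (forall a b, Sigma (Since a b) ->
     (Psi (Since a b) <-> Psi b \/ (Psi a /\ Phi (Since a b)))).

Definition sensible_rel (Sigma : fset) (lab : W -> fset) (R : W -> W -> Prop)
  : Prop :=
  forall w v, R w v -> sensible_pair Sigma (lab w) (lab v).

Definition labelled_system (Sigma : fset) (le : W -> W -> Prop)
  (lab : W -> fset) (R : W -> W -> Prop) : Prop :=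
  labelled_space Sigma le lab /\ bi_serial R /\ fully_confluent le R /\
  convex_rel le R /\ sensible_rel Sigma lab R.

(* L(w) = { lab v | v comparable with w }, as a set of label-sets
   (membership up to extensional equality of label-sets) *)
Definition Lset (le : W -> W -> Prop) (lab : W -> fset) (w : W) : fset -> Prop :=
  fun T => exists v, comparable le v w /\ seteq (lab v) T.

Definition Lseteq (le : W -> W -> Prop) (lab : W -> fset) (w v : W) : Prop :=
  forall T, Lset le lab w T <-> Lset le lab v T.

Definition sim (le : W -> W -> Prop) (lab : W -> fset) (w v : W) : Prop :=
  seteq (lab w) (lab v) /\ Lseteq le lab w v.

Definition quot (le : W -> W -> Prop) (lab : W -> fset) : Type :=
  { P : W -> Prop | exists w, P = sim le lab w }.

Definition cls (le : W -> W -> Prop) (lab : W -> fset) (w : W) : quot le lab :=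
  exist _ (sim le lab w) (ex_intro _ w eq_refl).

Definition leQ (le : W -> W -> Prop) (lab : W -> fset)
  (X Y : quot le lab) : Prop :=
  exists w v, X = cls le lab w /\ Y = cls le lab v /\
    Lseteq le lab w v /\ (forall f, lab v f -> lab w f).

Definition labQ (le : W -> W -> Prop) (lab : W -> fset)
  (X : quot le lab) : fset :=
  fun f => exists w, X = cls le lab w /\ lab w f.

Definition RQ (le : W -> W -> Prop) (lab : W -> fset) (R : W -> W -> Prop)
  (X Y : quot le lab) : Prop :=
  exists w v, X = cls le lab w /\ Y = cls le lab v /\ R w v.

Definition RQplus (le : W -> W -> Prop) (lab : W -> fset) (R : W -> W -> Prop)
  (X Y : quot le lab) : Prop :=
  exists X1 X2 Y1 Y2,
    leQ X1 X /\ leQ X X2 /\ leQ Y1 Y /\ leQ Y Y2 /\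
    RQ R X2 Y1 /\ RQ R X1 Y2.

End Structures.

(* Main.v *)
Require Import Defs.
Set Implicit Arguments.
Unset Strict Implicit.
Lemma sens_comb (S P Q Pc Pd Qa Qb : fset) :
  sensible_pair S P Qa -> (forall f, Q f -> Qa f) ->
  sensible_pair S P Qb -> (forall f, Qb f -> Q f) ->
  sensible_pair S Pc Q -> (forall f, P f -> Pc f) ->
  sensible_pair S Pd Q -> (forall f, Pd f -> P f) ->
  sensible_pair S P Q.
Proof.
  intros (a1&a2&a3&a4&a5&a6) hA (b1&b2&b3&b4&b5&b6) hB (c1&c2&c3&c4&c5&c6) hC (d1&d2&d3&d4&d5&d6) hD.
  split; [|split; [|split; [|split; [|split]]]].
  - intros x hs; split; intro h. apply hB; apply (b1 x hs); exact h. apply (a1 x hs); apply hA; exact h.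
  - intros x hs; split; intro h. apply hD; apply (d2 x hs); exact h. apply (c2 x hs); apply hC; exact h.
  - intros x hs; split. intro h. split. exact (proj1 (proj1 (a3 x hs) h)). apply hB; exact (proj2 (proj1 (b3 x hs) h)).
    intros [h1 h2]. apply (a3 x hs). split; [exact h1 | apply hA; exact h2].
  - intros x hs; split. intro h. split. exact (proj1 (proj1 (c4 x hs) h)). apply hD; exact (proj2 (proj1 (d4 x hs) h)).
    intros [h1 h2]. apply (c4 x hs). split; [exact h1 | apply hC; exact h2].
  - intros x y hs; split. intro h. destruct (proj1 (b5 x y hs) h) as [h1|[h1 h2]]; [left; exact h1 | right; split; [exact h1 | apply hB; exact h2]].
    intros [h1|[h1 h2]]; apply (a5 x y hs); [left; exact h1| right; split; [exact h1| apply hA; exact h2]].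
  - intros x y hs; split. intro h. destruct (proj1 (d6 x y hs) h) as [h1|[h1 h2]]; [left; exact h1 | right; split; [exact h1 | apply hD; exact h2]].
    intros [h1|[h1 h2]]; apply (c6 x y hs); [left; exact h1| right; split; [exact h1| apply hC; exact h2]].
Qed.
From Stdlib Require Import ProofIrrelevance FunctionalExtensionality PropExtensionality.

Lemma seteq_refl A : seteq A A. Proof. intro f; tauto. Qed.
Lemma seteq_sym A B : seteq A B -> seteq B A. Proof. intros H f; specialize (H f); tauto. Qed.
Lemma seteq_trans A B C : seteq A B -> seteq B C -> seteq A C.
Proof. intros H1 H2 f; specialize (H1 f); specialize (H2 f); tauto. Qed.

Lemma Lseteq_refl (W : Type) (le : W -> W -> Prop) (lab : W -> fset) (w : W) : Lseteq le lab w w. Proof. intro T; tauto. Qed.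
Lemma Lseteq_sym (W : Type) (le : W -> W -> Prop) (lab : W -> fset) (w v : W) : Lseteq le lab w v -> Lseteq le lab v w.
Proof. intros H T; specialize (H T); tauto. Qed.
Lemma Lseteq_trans (W : Type) (le : W -> W -> Prop) (lab : W -> fset) (u w v : W) : Lseteq le lab u w -> Lseteq le lab w v -> Lseteq le lab u v.
Proof. intros H1 H2 T; specialize (H1 T); specialize (H2 T); tauto. Qed.

Lemma sim_refl (W : Type) (le : W -> W -> Prop) (lab : W -> fset) (w : W) : sim le lab w w.
Proof. split; [apply seteq_refl | apply Lseteq_refl]. Qed.
Lemma sim_sym (W : Type) (le : W -> W -> Prop) (lab : W -> fset) (w v : W) : sim le lab w v -> sim le lab v w.
Proof. intros [a b]; split; [apply seteq_sym | apply Lseteq_sym]; auto. Qed.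
Lemma sim_trans (W : Type) (le : W -> W -> Prop) (lab : W -> fset) (u w v : W) : sim le lab u w -> sim le lab w v -> sim le lab u v.
Proof. intros [a b] [c d]; split; [eapply seteq_trans | eapply Lseteq_trans]; eauto. Qed.

Lemma exist_eq (A : Type) (P : A -> Prop) (a b : A) (p : P a) (q : P b) :
  a = b -> exist P a p = exist P b q.
Proof. intros; subst; f_equal; apply proof_irrelevance. Qed.

Lemma cls_eq (W : Type) (le : W -> W -> Prop) (lab : W -> fset) (w v : W) : sim le lab w v -> cls le lab w = cls le lab v.
Proof.
  intro H. unfold cls. apply exist_eq.
  apply functional_extensionality; intro u. apply propositional_extensionality.
  split; intro h. eapply sim_trans; [apply sim_sym, H | exact h]. eapply sim_trans; eauto.
Qed.

Lemma cls_inv (W : Type) (le : W -> W -> Prop) (lab : W -> fset) (w v : W) : cls le lab w = cls le lab v -> sim le lab w v.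
Proof. intro e. apply (f_equal (@proj1_sig _ _)) in e. simpl in e. rewrite e. apply sim_refl. Qed.

Lemma quot_cls (W : Type) (le : W -> W -> Prop) (lab : W -> fset) (X : quot le lab) : exists w : W, X = cls le lab w.
Proof. destruct X as [P [w e]]. exists w. unfold cls. apply exist_eq. exact e. Qed.

Lemma labQ_cls (W : Type) (le : W -> W -> Prop) (lab : W -> fset) (w : W) : labQ (cls le lab w) = lab w.
Proof.
  apply functional_extensionality; intro f. apply propositional_extensionality. split.
  - intros [w' [e h]]. apply cls_inv in e. destruct e as [s _]. apply (proj2 (s f)); exact h.
  - intro h. exists w; split; auto.
Qed.

Lemma leQ_cls (W : Type) (le : W -> W -> Prop) (lab : W -> fset) (w v : W) :
  leQ (cls le lab w) (cls le lab v) <-> Lseteq le lab w v /\ (forall f, lab v f -> lab w f).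
Proof.
  split.
  - intros [w' [v' [e1 [e2 [HL Hl]]]]]. apply cls_inv in e1. apply cls_inv in e2.
    destruct e1 as [s1 L1], e2 as [s2 L2]. split.
    + eapply Lseteq_trans; [exact L1|]. eapply Lseteq_trans; [exact HL|]. apply Lseteq_sym; exact L2.
    + intros f h. apply (proj2 (s1 f)). apply Hl. apply (proj1 (s2 f)). exact h.
  - intros [a b]. exists w, v; auto.
Qed.

Lemma comp_sym W (le : W -> W -> Prop) a b : comparable le a b -> comparable le b a.
Proof. unfold comparable; tauto. Qed.

Lemma comp_trans W (le : W -> W -> Prop) : locally_linear le ->
  forall a b c, comparable le a b -> comparable le b c -> comparable le a c.
Proof.
  intros (_&_&_&E&Er&Es&Et&Ec&Ele) a b c H1 H2. apply Ec.
  assert (E a b) by (destruct H1; [auto | apply Es; auto]).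
  assert (E b c) by (destruct H2; [auto | apply Es; auto]). eauto.
Qed.

Lemma Lset_comp (W : Type) (le : W -> W -> Prop) (lab : W -> fset) (u p : W) : locally_linear le -> comparable le u p -> Lseteq le lab u p.
Proof.
  intros HLL hc T; unfold Lset; split; intros [v [h1 h2]]; exists v; split; auto.
  - eapply comp_trans; eauto.
  - eapply comp_trans; eauto. apply comp_sym; auto.
Qed.

Definition monoP {W : Type} (le : W -> W -> Prop) (lab : W -> fset) :=
  forall w v, le w v -> forall f, lab v f -> lab w f.

Lemma down_pt (W : Type) (le : W -> W -> Prop) (lab : W -> fset) : locally_linear le -> monoP le lab ->
  forall p z : W, Lseteq le lab z p -> (forall f, lab p f -> lab z f) ->
  exists u, le u p /\ sim le lab u z.
Proof.
  intros HLL HM p z HL Hl.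
  assert (Lset le lab p (lab z)) as [u [hc hs]].
  { apply HL. exists z. split. left. apply HLL. apply seteq_refl. }
  destruct hc as [hup | hpu].
  - exists u. split; auto. split; auto.
    eapply Lseteq_trans. apply Lset_comp; auto. left; exact hup. apply Lseteq_sym; auto.
  - exists p. split. apply HLL. split.
    + intro f; split; auto. intro h. eapply HM; [exact hpu|]. apply (proj2 (hs f)); exact h.
    + apply Lseteq_sym; auto.
Qed.

Lemma up_pt (W : Type) (le : W -> W -> Prop) (lab : W -> fset) : locally_linear le -> monoP le lab ->
  forall p z : W, Lseteq le lab z p -> (forall f, lab z f -> lab p f) ->
  exists u, le p u /\ sim le lab u z.
Proof.
  intros HLL HM p z HL Hl.
  assert (Lset le lab p (lab z)) as [u [hc hs]].
  { apply HL. exists z. split. left. apply HLL. apply seteq_refl. }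
  destruct hc as [hup | hpu].
  - exists p. split. apply HLL. split.
    + intro f; split; auto. intro h. apply (proj1 (hs f)). eapply HM; [exact hup|]. exact h.
    + apply Lseteq_sym; auto.
  - exists u. split; auto. split; auto.
    eapply Lseteq_trans. apply Lset_comp; auto. right; exact hpu. apply Lseteq_sym; auto.
Qed.

Lemma le_leQ (W : Type) (le : W -> W -> Prop) (lab : W -> fset) (a b : W) : locally_linear le -> monoP le lab -> le a b ->
  leQ (cls le lab a) (cls le lab b).
Proof. intros HLL HM h. apply leQ_cls. split. apply Lset_comp; auto. left; auto. apply HM; auto. Qed.

Lemma leQ_refl (W : Type) (le : W -> W -> Prop) (lab : W -> fset) (X : quot le lab) : @leQ W le lab X X.
Proof. destruct (quot_cls X) as [x ->]. apply leQ_cls. split. apply Lseteq_refl. auto. Qed.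

Lemma leQ_trans (W : Type) (le : W -> W -> Prop) (lab : W -> fset) (X Y Z : quot le lab) : @leQ W le lab X Y -> leQ Y Z -> leQ X Z.
Proof.
  destruct (quot_cls X) as [x ->]. destruct (quot_cls Y) as [y ->]. destruct (quot_cls Z) as [z ->].
  rewrite !leQ_cls. intros [a b] [c d]. split. eapply Lseteq_trans; eauto. auto.
Qed.

Lemma leQ_antisym (W : Type) (le : W -> W -> Prop) (lab : W -> fset) (X Y : quot le lab) : @leQ W le lab X Y -> leQ Y X -> X = Y.
Proof.
  destruct (quot_cls X) as [x ->]. destruct (quot_cls Y) as [y ->].
  rewrite !leQ_cls. intros [a b] [c d]. apply cls_eq. split; auto. intro f; split; auto.
Qed.

Lemma labQ_mono (W : Type) (le : W -> W -> Prop) (lab : W -> fset) (X Y : quot le lab) : @leQ W le lab X Y -> forall f, labQ Y f -> labQ X f.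
Proof.
  destruct (quot_cls X) as [x ->]. destruct (quot_cls Y) as [y ->].
  rewrite !labQ_cls, leQ_cls. intros [a b]; auto.
Qed.

Lemma fdQ (W : Type) (le : W -> W -> Prop) (lab : W -> fset) (R : W -> W -> Prop) : locally_linear le -> monoP le lab -> fully_confluent le R ->
  forall X X' Y' : quot le lab, @leQ W le lab X X' -> RQ R X' Y' ->
  exists Y, RQ R X Y /\ leQ Y Y'.
Proof.
  intros HLL HM (fd&fu&bd&bu) X X' Y' H1 [a [b [e1 [e2 hab]]]].
  destruct (quot_cls X) as [x ->]. subst X' Y'.
  apply leQ_cls in H1 as [HL Hl].
  destruct (down_pt HLL HM HL Hl) as [u [hu hs]].
  destruct (fd u a b hu hab) as [y [h1 h2]].
  exists (cls le lab y). split.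
  - exists u, y. split. apply cls_eq, sim_sym; auto. split; auto.
  - apply le_leQ; auto.
Qed.

Lemma fuQ (W : Type) (le : W -> W -> Prop) (lab : W -> fset) (R : W -> W -> Prop) : locally_linear le -> monoP le lab -> fully_confluent le R ->
  forall X X' Y : quot le lab, @leQ W le lab X X' -> RQ R X Y ->
  exists Y', RQ R X' Y' /\ leQ Y Y'.
Proof.
  intros HLL HM (fd&fu&bd&bu) X X' Y H1 [a [b [e1 [e2 hab]]]].
  destruct (quot_cls X') as [x' ->]. subst X Y.
  apply leQ_cls in H1 as [HL Hl].
  destruct (up_pt HLL HM (Lseteq_sym HL) Hl) as [u [hu hs]].
  destruct (fu a u b hu hab) as [y' [h1 h2]].
  exists (cls le lab y'). split.
  - exists u, y'. split. apply cls_eq, sim_sym; auto. split; auto.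
  - apply le_leQ; auto.
Qed.

Lemma bdQ (W : Type) (le : W -> W -> Prop) (lab : W -> fset) (R : W -> W -> Prop) : locally_linear le -> monoP le lab -> fully_confluent le R ->
  forall X' Y' Y : quot le lab, RQ R X' Y' -> @leQ W le lab Y Y' ->
  exists X, leQ X X' /\ RQ R X Y.
Proof.
  intros HLL HM (fd&fu&bd&bu) X' Y' Y [a [b [e1 [e2 hab]]]] H1.
  destruct (quot_cls Y) as [y ->]. subst X' Y'.
  apply leQ_cls in H1 as [HL Hl].
  destruct (down_pt HLL HM HL Hl) as [v [hv hs]].
  destruct (bd a b v hab hv) as [x [h1 h2]].
  exists (cls le lab x). split.
  - apply le_leQ; auto.
  - exists x, v. split; auto. split; auto. apply cls_eq, sim_sym; auto.
Qed.

Lemma buQ (W : Type) (le : W -> W -> Prop) (lab : W -> fset) (R : W -> W -> Prop) : locally_linear le -> monoP le lab -> fully_confluent le R ->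
  forall X Y Y' : quot le lab, RQ R X Y -> @leQ W le lab Y Y' ->
  exists X', leQ X X' /\ RQ R X' Y'.
Proof.
  intros HLL HM (fd&fu&bd&bu) X Y Y' [a [b [e1 [e2 hab]]]] H1.
  destruct (quot_cls Y') as [y' ->]. subst X Y.
  apply leQ_cls in H1 as [HL Hl].
  destruct (up_pt HLL HM (Lseteq_sym HL) Hl) as [v [hv hs]].
  destruct (bu a b v hab hv) as [x' [h1 h2]].
  exists (cls le lab x'). split.
  - apply le_leQ; auto.
  - exists x', v. split; auto. split; auto. apply cls_eq, sim_sym; auto.
Qed.

Lemma RQ_plus (W : Type) (le : W -> W -> Prop) (lab : W -> fset) (R : W -> W -> Prop) (X Y : quot le lab) : RQ R X Y -> @RQplus W le lab R X Y.
Proof. intro h. exists X, X, Y, Y. repeat split; try apply leQ_refl; auto. Qed.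

Lemma sensQ (W : Type) (le : W -> W -> Prop) (lab : W -> fset) (R : W -> W -> Prop) Sigma (X Y : quot le lab) : sensible_rel Sigma lab R ->
  @RQ W le lab R X Y -> sensible_pair Sigma (labQ X) (labQ Y).
Proof.
  intros HS [a [b [e1 [e2 hab]]]]. subst. rewrite !labQ_cls. apply HS; auto.
Qed.

Theorem proposition6p2 (Sigma : fset) (W : Type) (le : W -> W -> Prop)
  (lab : W -> fset) (R : W -> W -> Prop) :
  subformula_closed Sigma ->
  labelled_system Sigma le lab R ->
  labelled_system Sigma (@leQ W le lab) (@labQ W le lab) (@RQplus W le lab R).
Proof.
  intros Hsub (HLS & HBS & HFC & HCV & HSR).
  destruct HLS as (HLL & HTY & HM & HImp & HCo).
  split; [|split; [|split; [|split]]].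
  - split; [|split; [|split; [|split]]].
    + split. intro X; apply leQ_refl. split. intros; apply leQ_antisym; auto.
      split. intros; eapply leQ_trans; eauto.
      exists (fun X Y => exists x y, X = cls le lab x /\ Y = cls le lab y /\ Lseteq le lab x y).
      split.
      { intro X; destruct (quot_cls X) as [x ->]; exists x, x; split; auto; split; auto; apply Lseteq_refl. }
      split.
      { intros X Y [x [y [-> [-> h]]]]; exists y, x; split; auto; split; auto; apply Lseteq_sym; auto. }
      split.
      { intros X Y Z [x [y [-> [e h1]]]] [y' [z [e' [-> h2]]]]. rewrite e in e'.
        apply cls_inv in e' as [_ h3]. exists x, z. split; auto. split; auto.
        eapply Lseteq_trans; [exact h1|]. eapply Lseteq_trans; eauto. }
      split.
      { intros X Y [x [y [-> [-> h]]]].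
        assert (Lset le lab x (lab y)) as [u [hc hs]]
          by (apply h; exists y; split; [left; apply HLL | apply seteq_refl]).
        destruct hc as [hux|hxu].
        - right. apply leQ_cls. split. apply Lseteq_sym; auto.
          intros f hf. apply (proj1 (hs f)). eapply HM; eauto.
        - left. apply leQ_cls. split; auto. intros f hf. eapply HM; [exact hxu|].
          apply (proj2 (hs f)); auto. }
      { intros X Y hle. destruct (quot_cls X) as [x ->]. destruct (quot_cls Y) as [y ->].
        apply leQ_cls in hle as [h _]. exists x, y; auto. }
    + intro X. destruct (quot_cls X) as [x ->]. rewrite labQ_cls. apply HTY.
    + intros X Y h f. apply labQ_mono; auto.
    + intros X a b hs hn. destruct (quot_cls X) as [w ->]. rewrite labQ_cls in hn.
      destruct (HImp w a b hs hn) as [v [h1 [h2 h3]]]. exists (cls le lab v). rewrite labQ_cls.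
      split; [apply le_leQ|]; auto.
    + intros X a b hn. destruct (quot_cls X) as [w ->]. rewrite labQ_cls in hn.
      destruct (HCo w a b hn) as [v [h1 [h2 h3]]]. exists (cls le lab v). rewrite labQ_cls.
      split; [apply le_leQ|]; auto.
  - intro X. destruct (quot_cls X) as [x ->]. destruct (HBS x) as [[y hy] [z hz]].
    split; [exists (cls le lab y) | exists (cls le lab z)]; apply RQ_plus;
      [exists x, y | exists z, x]; auto.
  - split; [|split; [|split]].
    + intros X X' Y' hle [X1 [X2 [Y1 [Y2 (h1&h2&h3&h4&r1&r2)]]]].
      destruct (fdQ HLL HM HFC (leQ_trans hle h2) r1) as [Y [r h]].
      exists Y. split. apply RQ_plus; auto. eapply leQ_trans; eauto.
    + intros X X' Y hle [X1 [X2 [Y1 [Y2 (h1&h2&h3&h4&r1&r2)]]]].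
      destruct (fuQ HLL HM HFC (leQ_trans h1 hle) r2) as [Y' [r h]].
      exists Y'. split. apply RQ_plus; auto. eapply leQ_trans; eauto.
    + intros X' Y' Y [X1 [X2 [Y1 [Y2 (h1&h2&h3&h4&r1&r2)]]]] hle.
      destruct (bdQ HLL HM HFC r2 (leQ_trans hle h4)) as [X [h r]].
      exists X. split. eapply leQ_trans; eauto. apply RQ_plus; auto.
    + intros X Y Y' [X1 [X2 [Y1 [Y2 (h1&h2&h3&h4&r1&r2)]]]] hle.
      destruct (buQ HLL HM HFC r1 (leQ_trans h3 hle)) as [X' [h r]].
      exists X'. split. eapply leQ_trans; eauto. apply RQ_plus; auto.
  - split.
    + intros X Y1 Y Y2 [A1 [A2 [B1 [B2 (a1&a2&a3&a4&ra&rb)]]]]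
        [C1 [C2 [D1 [D2 (c1&c2&c3&c4&rc&rd)]]]] hl1 hl2.
      exists C1, A2, B1, D2. repeat split; auto; eapply leQ_trans; eauto.
    + intros Y X1 X X2 [A1 [A2 [B1 [B2 (a1&a2&a3&a4&ra&rb)]]]]
        [C1 [C2 [D1 [D2 (c1&c2&c3&c4&rc&rd)]]]] hl1 hl2.
      exists A1, C2, D1, B2. repeat split; auto; eapply leQ_trans; eauto.
  - intros X Y [X1 [X2 [Y1 [Y2 (h1&h2&h3&h4&r1&r2)]]]].
    destruct (fdQ HLL HM HFC h2 r1) as [Ya [ra ha]].
    destruct (fuQ HLL HM HFC h1 r2) as [Yb [rb hb]].
    destruct (bdQ HLL HM HFC r2 h4) as [Xc [hc rc]].
    destruct (buQ HLL HM HFC r1 h3) as [Xd [hd rd]].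
    apply (@sens_comb Sigma (labQ X) (labQ Y) (labQ Xc) (labQ Xd) (labQ Ya) (labQ Yb)).
    + apply sensQ with (R := R); auto.
    + apply labQ_mono. eapply leQ_trans; eauto.
    + apply sensQ with (R := R); auto.
    + apply labQ_mono. eapply leQ_trans; eauto.
    + apply sensQ with (R := R); auto.
    + apply labQ_mono. eapply leQ_trans; eauto.
    + apply sensQ with (R := R); auto.
    + apply labQ_mono. eapply leQ_trans; eauto.
Qed.
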